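(* Let $\mathbf v\in E^*_{[s,t]}V$ be nonzero with $L_1\mathbf v=L_2\mathbf v=\mathbf 0$, let $r=d-s-t$, $m_1=r-s$, $m_2=s-t$. Then $m_1,m_2\ge 0$, i.e. $r\ge s\ge t$, and: (i) $(r,s,t)=(m_1+m_2+t,\;m_2+t,\;t)$; (ii) $t\in\{0,1,\dots,\lfloor d/3\rfloor\}$; (iii) $m_1=d-3t-2m_2$; (iv) $m_2\in\{0,1,\dots,\lfloor (d-3t)/2\rfloor\}$.
   Context: Let $d\ge1$, $\mathbb F_3=\{0,1,2\}$, $X=\mathbb F_3^d$, $V=\mathbb C^X$ with standard basis $\{\hat y:y\in X\}$. $E^*_{[s,t]}$ is the diagonal projection onto the span of those $\hat y$ with $y$ having exactly $s$ coordinates equal to $1$ and $t$ equal to $2$. Define linear operators on $V$: $L_1\hat y$ is the sum of $\hat z$ over all $z$ obtained from $y$ by changing exactly one coordinate equal to $1$ into $0$ (empty sum $=0$), and $L_2$ similarly changes one coordinate $2\mapsto 1$. *)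

(* Defs.v *)
From mathcomp Require Import all_boot all_order all_algebra.
Set Implicit Arguments. Unset Strict Implicit. Unset Printing Implicit Defensive.
Import GRing.Theory Num.Theory.
Local Open Scope ring_scope.

(* F_3 = {0,1,2} is modelled by 'I_3; X = F_3^d by {ffun 'I_d -> 'I_3}. *)
Definition X (d : nat) : finType := {ffun 'I_d -> 'I_3}.

(* V = C^X : vectors are finite functions X -> C; v y is the coefficient of \hat y. *)
Definition V (C : numClosedFieldType) (d : nat) := {ffun X d -> C}.

Definition cnt (d : nat) (a : 'I_3) (y : X d) : nat := #|[set i | y i == a]|.

Definition setc (d : nat) (y : X d) (i : 'I_d) (b : 'I_3) : X d :=
  [ffun j => if j == i then b else y j].

Definition step (d : nat) (a b : 'I_3) (y z : X d) : bool :=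
  [exists i, (y i == a) && (z == setc y i b)].

(* L_{a->b} \hat y = sum of \hat z over z with step a b y z, extended linearly:
   (L v) z = sum_y v(y) [step a b y z]. *)
Definition Lop (C : numClosedFieldType) (d : nat) (a b : 'I_3) (v : V C d) : V C d :=
  [ffun z => \sum_(y : X d | step a b y z) v y].

Definition L1 (C : numClosedFieldType) (d : nat) (v : V C d) : V C d :=
  Lop (inord 1) (inord 0) v.
Definition L2 (C : numClosedFieldType) (d : nat) (v : V C d) : V C d :=
  Lop (inord 2) (inord 1) v.

Definition inEst (C : numClosedFieldType) (d s t : nat) (v : V C d) : Prop :=
  forall y : X d, v y != 0 -> cnt (inord 1) y = s /\ cnt (inord 2) y = t.

(* Main.v *)
Require Import Defs.
From mathcomp Require Import all_boot all_order all_algebra.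
Import GRing.Theory Num.Theory.
Local Open Scope ring_scope.
From mathcomp Require Import zify.

Section S.
Variable (C : numClosedFieldType) (d : nat).

Lemma setcE (y : X d) i b j : setc y i b j = if j == i then b else y j.
Proof. by rewrite /setc ffunE. Qed.

Lemma setc_id (y : X d) i : setc y i (y i) = y.
Proof. by apply/ffunP=> j; rewrite setcE; case: eqP => // ->. Qed.

Lemma setcC (y : X d) i j a b : i != j ->
  setc (setc y i a) j b = setc (setc y j b) i a.
Proof.
move=> ij; apply/ffunP=> k; rewrite !setcE.
case: (eqVneq k j) => [kj|kj]; case: (eqVneq k i) => [ki|ki] //.
by move: ij; rewrite -ki -kj eqxx.
Qed.

Lemma setcK (y : X d) i a b : setc (setc y i a) i b = setc y i b.
Proof. by apply/ffunP=> k; rewrite !setcE; case: eqP. Qed.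

Lemma Lop_idx (a b : 'I_3) (v : V C d) z : a != b ->
  Lop a b v z = \sum_(i | z i == b) v (setc z i a).
Proof.
move=> ab; rewrite /Lop ffunE.
have inj : {in [pred i | z i == b] &, injective (fun i => setc z i a)}.
  move=> i j /eqP Hi /eqP Hj /= E; apply/eqP; apply/negPn/negP=> ij.
  have := congr1 (fun f : X d => f i) E; rewrite !setcE eqxx (negbTE ij) Hi.
  by move=> /eqP; rewrite (negbTE ab).
rewrite -(big_imset _ inj) /=; apply: eq_bigl => y.
apply/existsP/imsetP.
- case=> i /andP[/eqP yi /eqP ->]; exists i; first by rewrite inE setcE eqxx.
  by rewrite setcK -yi setc_id.
- case=> i; rewrite inE => /eqP zi ->; exists i.
  by rewrite setcE eqxx eqxx /= setcK -zi setc_id.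
Qed.


Lemma sum_cnt (z : X d) (b : 'I_3) (x : C) :
  \sum_(i | z i == b) x = (cnt b z)%:R * x.
Proof. by rewrite sumr_const /cnt cardsE mulr_natl. Qed.

Lemma inner (a b : 'I_3) (v : V C d) (z : X d) (i : 'I_d) : a != b -> z i = b ->
  Lop b a v (setc z i a) =
  v z + \sum_(j | z j == a) v (setc (setc z i a) j b).
Proof.
move=> ab zi; rewrite Lop_idx 1?eq_sym //.
rewrite (bigD1 i) /=; last by rewrite setcE eqxx.
rewrite setcK -zi setc_id; congr (_ + _).
apply: eq_bigl => j; rewrite setcE.
case: (eqVneq j i) => [->|ji]; last by rewrite andbT.
by rewrite zi andbF; apply/esym/negbTE; rewrite eq_sym.
Qed.

Lemma comm (a b : 'I_3) (v : V C d) (z : X d) : a != b ->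
  Lop a b (Lop b a v) z - Lop b a (Lop a b v) z =
  ((cnt b z)%:R - (cnt a z)%:R) * v z.
Proof.
move=> ab; rewrite Lop_idx // [Lop b a _ z]Lop_idx 1?eq_sym //.
rewrite (eq_bigr (fun i => v z + \sum_(j | z j == a) v (setc (setc z i a) j b)));
  last by move=> i /eqP zi; rewrite inner.
rewrite [X in _ - X](eq_bigr (fun i => v z + \sum_(j | z j == b) v (setc (setc z i b) j a)));
  last by move=> i /eqP zi; rewrite inner 1?eq_sym.
rewrite !big_split /= !sum_cnt exchange_big /=.
rewrite [X in _ - (_ + X)](eq_bigr (fun j => \sum_(i | z i == b) v (setc (setc z i a) j b))).
  by rewrite mulrBl opprD addrACA subrr addr0.
move=> i /eqP zi; apply: eq_bigr => j /eqP zj; rewrite setcC //.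
by apply/eqP=> E; move: ab; rewrite -zi -zj E eqxx.
Qed.

Lemma step_sym1 (a b : 'I_3) (y z : X d) : step a b y z -> step b a z y.
Proof.
case/existsP=> i /andP[/eqP yi /eqP ->]; apply/existsP; exists i.
by rewrite setcE eqxx eqxx /= setcK -yi setc_id.
Qed.

Lemma step_sym (a b : 'I_3) (y z : X d) : step a b y z = step b a z y.
Proof. by apply/idP/idP; apply: step_sym1. Qed.

Lemma adj (a b : 'I_3) (v w : V C d) :
  \sum_z Lop a b w z * (v z)^* = \sum_y w y * (Lop b a v y)^*.
Proof.
rewrite /Lop.
under eq_bigr do rewrite ffunE big_distrl /= big_mkcond /=.
rewrite exchange_big /=; apply: eq_bigr => y _.
rewrite ffunE rmorph_sum big_distrr /= big_mkcond /=.
by rewrite [RHS]big_mkcond; apply: eq_bigr => z _; rewrite step_sym.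
Qed.

Lemma key (a b : 'I_3) (v : V C d) p q : a != b -> v != 0 ->
  (forall y, v y != 0 -> cnt a y = p /\ cnt b y = q) ->
  Lop a b v = 0 -> (p <= q)%N.
Proof.
move=> ab v0 supp L0.
set w := Lop b a v.
have E z : Lop a b w z = (q%:R - p%:R) * v z.
  have := comm a b v z ab; rewrite -/w L0.
  have -> : Lop b a (0 : V C d) z = 0.
    by rewrite /Lop ffunE big1 // => y _; rewrite ffunE.
  rewrite subr0 => ->.
  have [->|nz] := eqVneq (v z) 0; first by rewrite !mulr0.
  by have [-> ->] := supp z nz.
have H := adj a b v w.
rewrite (eq_bigr (fun z => (q%:R - p%:R) * (v z * (v z)^*))) in H;
  last by move=> z _; rewrite E mulrA.
rewrite -mulr_sumr -/w in H.
have ge0 : 0 <= \sum_y w y * (w y)^* by apply: sumr_ge0 => y _; apply: mul_conjC_ge0.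
have [z nz] : exists z, v z != 0.
  apply/existsP; apply: contraNT v0 => /existsPn H0; apply/eqP/ffunP => z.
  by rewrite ffunE; apply/eqP; have := H0 z; rewrite negbK.
have gt0 : 0 < \sum_y v y * (v y)^*.
  rewrite (bigD1 z) //=; apply: ltr_wpDr; last by rewrite mul_conjC_gt0.
  by apply: sumr_ge0 => y _; apply: mul_conjC_ge0.
by rewrite -H pmulr_lge0 // subr_ge0 ler_nat in ge0.
Qed.

Lemma cnt_sum (y : X d) : (cnt (inord 0) y + cnt (inord 1) y + cnt (inord 2) y)%N = d.
Proof.
have cE a : cnt a y = (\sum_i (y i == a))%N.
  rewrite /cnt cardsE -sum1_card big_mkcond /=; apply: eq_bigr => i _.
  by change (i \in _) with (y i == a); case: (y i == a).
rewrite !cE -!big_split /= -[in RHS](card_ord d) -sum1_card; apply: eq_bigr => i _.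
by case: (y i) => [[|[|[|k]]] Hk] //=; rewrite -!val_eqE /= !inordK.
Qed.
End S.

Theorem lemma3p6 (C : numClosedFieldType) (d s t : nat) (v : V C d) :
  v != 0 -> inEst s t v -> L1 v = 0 -> L2 v = 0 ->
  let r : int := d%:Z - s%:Z - t%:Z in
  let m1 : int := r - s%:Z in
  let m2 : int := s%:Z - t%:Z in
  (0 <= m1 /\ 0 <= m2) /\
  (r = m1 + m2 + t%:Z /\ s%:Z = m2 + t%:Z) /\
  (t <= d %/ 3)%N /\
  m1 = d%:Z - 3 * t%:Z - 2 * m2 /\
  m2 <= ((d%:Z - 3 * t%:Z) %/ 2)%Z.
Proof.
move=> v0 hE h1 h2.
have [y ny] : exists y, v y != 0.
  apply/existsP; apply: contraNT v0 => /existsPn H0; apply/eqP/ffunP => z.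
  by rewrite ffunE; apply/eqP; have := H0 z; rewrite negbK.
have [c1 c2] := hE y ny.
have c0 z : v z != 0 -> cnt (inord 0) z = (d - s - t)%N.
  move=> nz; have := @cnt_sum d z; have [-> ->] := hE z nz; lia.
have hd := @cnt_sum d y; rewrite c1 c2 in hd.
have k1 : (s <= d - s - t)%N.
  apply: (@key C d (inord 1) (inord 0) v s (d - s - t)%N _ v0 _ h1).
    by rewrite -val_eqE /= !inordK.
  by move=> z nz; have [-> _] := hE z nz; rewrite c0.
have k2 : (t <= s)%N.
  apply: (@key C d (inord 2) (inord 1) v t s _ v0 _ h2).
    by rewrite -val_eqE /= !inordK.
  by move=> z nz; have [-> ->] := hE z nz.
move=> r m1 m2; rewrite /m1 /m2 /r.
have hd3 : (3 * t <= d)%N by lia.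
split; [lia|split; [lia|split]].
  lia.
split; first lia.
lia.
Qed.
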